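(* Let $\Bbbk$ be a field of characteristic zero and $h,c\in\Bbbk$. Regarded as a module over the subalgebra $\mathcal O=\mathrm{span}\{L_n-L_{-n}\mid n\geq 1\}$ of the Virasoro algebra, the Verma module $V(h,c)$ is a free $U(\mathcal O)$-module of rank $1$; that is, $V(h,c)\cong U(\mathcal O)$ as $\mathcal O$-modules.
   Context: The Virasoro algebra $\mathrm{Vir}$ over $\Bbbk$ has basis $\{L_n\mid n\in\mathbb{Z}\}\cup\{C\}$ with $C$ central and $[L_n,L_m]=(n-m)L_{n+m}+\frac1{12}n(n^2-1)\delta_{m,-n}C$. Let $\mathrm{Vir}_+=\mathrm{span}\{L_n\mid n>0\}$, $\mathrm{Vir}_0=\Bbbk L_0\oplus\Bbbk C$. The Verma module is $V(h,c)=\mathrm{Ind}_{\mathrm{Vir}_0\oplus\mathrm{Vir}_+}^{\mathrm{Vir}}\Bbbk|h,c\rangle$, where $L_0$ acts on $|h,c\rangle$ by $h$, $C$ by $c$, and $\mathrm{Vir}_+$ by $0$. *)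

(* Defs.v *)
From HB Require Import structures.
From mathcomp Require Import all_boot all_order all_algebra.
Set Implicit Arguments. Unset Strict Implicit. Unset Printing Implicit Defensive.
Import Order.TTheory GRing.Theory Num.Theory.
Local Open Scope ring_scope.

Definition is_klinear (k : fieldType) (U W : lmodType k) (f : U -> W) : Prop :=
  forall (a : k) (x y : U), f (a *: x + y) = a *: f x + f y.

Definition is_vir_action (k : fieldType) (V : lmodType k)
    (L : int -> V -> V) (C : V -> V) : Prop :=
  [/\ forall n, is_klinear (L n),
      is_klinear C,
      forall (n m : int) (x : V),
        L n (L m x) - L m (L n x)
        = (n - m)%:~R *: L (n + m) x
          + (if m == - n then (n * (n ^+ 2 - 1))%:~R / 12%:R else 0) *: C x
    & forall (n : int) (x : V), C (L n x) = L n (C x)].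

Definition is_hw_vector (k : fieldType) (V : lmodType k)
    (L : int -> V -> V) (C : V -> V) (h c : k) (v : V) : Prop :=
  [/\ L 0 v = h *: v, C v = c *: v & forall n : int, 0 < n -> L n v = 0].

(* (V, L, C, v) is the Verma module V(h,c) = Ind_{Vir_0 + Vir_+}^{Vir} k|h,c>
   with v = |h,c>, characterized by its defining universal property:
   Hom_Vir(V(h,c), M) = {highest weight vectors of weight (h,c) in M}. *)
Definition is_verma (k : fieldType) (h c : k) (V : lmodType k)
    (L : int -> V -> V) (C : V -> V) (v : V) : Prop :=
  [/\ is_vir_action L C,
      is_hw_vector L C h c v &
      forall (M : lmodType k) (LM : int -> M -> M) (CM : M -> M) (w : M),
        is_vir_action LM CM -> is_hw_vector LM CM h c w ->
        exists! f : V -> M,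
          [/\ is_klinear f, f v = w,
              forall n x, f (L n x) = LM n (f x)
            & forall x, f (C x) = CM (f x)]].

(* An action of the Lie algebra O = span{ L_n - L_{-n} | n >= 1 } on M:
   e n is the action of L_n - L_{-n} (so e 0 = 0, e (-n) = - e n), and
   [e_n, e_m] = (n-m) e_{n+m} - (n+m) e_{n-m} (the bracket of O). *)
Definition is_O_action (k : fieldType) (M : lmodType k) (e : int -> M -> M) : Prop :=
  [/\ forall n, is_klinear (e n),
      forall x, e 0 x = 0,
      forall n x, e (- n) x = - e n x
    & forall (n m : int) (x : M),
        e n (e m x) - e m (e n x)
        = (n - m)%:~R *: e (n + m) x - (n + m)%:~R *: e (n - m) x].

Definition restrict_O (k : fieldType) (V : lmodType k) (L : int -> V -> V)
  : int -> V -> V := fun n x => L n x - L (- n) x.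

(* Stated via the universal property defining U(O) as the free
   O-module on one generator: there is g in V such that for every O-module M
   and m in M there is a unique O-module map V -> M sending g to m. *)
Definition free_rank1_O (k : fieldType) (V : lmodType k) (e : int -> V -> V) : Prop :=
  exists g : V,
    forall (M : lmodType k) (eM : int -> M -> M) (m : M),
      is_O_action eM ->
      exists! f : V -> M,
        [/\ is_klinear f, f g = m & forall n x, f (e n x) = eM n (f x)].

(* Main.v *)
Require Import Defs.
From HB Require Import structures.
From mathcomp Require Import all_boot all_order all_algebra.
From mathcomp Require Import ring lra.
From mathcomp Require Import zify.
From mathcomp Require boolp.
Set Implicit Arguments. Unset Strict Implicit. Unset Printing Implicit Defensive.
Import Order.TTheory GRing.Theory Num.Theory.
Local Open Scope ring_scope.

Definition B := option int.

Definition ev (k : fieldType) (W : lmodType k) (X : seq (k * B)) (f : B -> W) : W :=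
  \sum_(p <- X) p.1 *: f p.2.

Definition kap (k : fieldType) (n m : int) : k :=
  if m == - n then (n * (n ^+ 2 - 1))%:~R / 12%:R else 0.

Definition br (k : fieldType) (x y : B) : seq (k * B) :=
  match x, y with
  | Some n, Some m => [:: ((n - m)%:~R, Some (n + m)); (kap k n m, None)]
  | _, _ => [::]
  end.

Fixpoint D (k : fieldType) (W : lmodType k) (F : seq B -> W) (g : B) (w : seq B)
  {struct w} : W :=
  match w with
  | [::] => 0
  | h :: w' => ev (br k g h) (fun h' => F (h' :: w')) + D (fun u => F (h :: u)) g w'
  end.

Definition lin (k : fieldType) (U W : lmodType k) (f : U -> W) : Prop :=
  forall (a : k) (x y : U), f (a *: x + y) = a *: f x + f y.

Lemma lin0 (k : fieldType) (U W : lmodType k) (f : U -> W) : lin f -> f 0 = 0.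
Proof.
move=> Hf; have := Hf 1 0 0; rewrite !scale1r !addr0 => H.
by apply: (@addrI _ (f 0)); rewrite addr0 -H.
Qed.

Lemma linD (k : fieldType) (U W : lmodType k) (f : U -> W) x y : lin f -> f (x + y) = f x + f y.
Proof. by move=> Hf; have := Hf 1 x y; rewrite !scale1r. Qed.

Lemma linZ (k : fieldType) (U W : lmodType k) (f : U -> W) a x : lin f -> f (a *: x) = a *: f x.
Proof. by move=> Hf; rewrite -(addr0 (a *: x)) Hf lin0 // addr0. Qed.

Lemma linN (k : fieldType) (U W : lmodType k) (f : U -> W) x : lin f -> f (- x) = - f x.
Proof. by move=> Hf; rewrite -scaleN1r linZ // scaleN1r. Qed.

Lemma linB (k : fieldType) (U W : lmodType k) (f : U -> W) x y : lin f -> f (x - y) = f x - f y.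
Proof. by move=> Hf; rewrite linD // linN. Qed.

Lemma ev_nil (k : fieldType) (W : lmodType k) (f : B -> W) : ev [::] f = 0.
Proof. by rewrite /ev big_nil. Qed.

Lemma ev_cons (k : fieldType) (W : lmodType k) a h X (f : B -> W) :
  ev ((a, h) :: X) f = a *: f h + ev X f.
Proof. by rewrite /ev big_cons. Qed.

Lemma ev_ext (k : fieldType) (W : lmodType k) X (f g : B -> W) :
  (forall h, f h = g h) -> ev X f = ev X g.
Proof. by move=> E; apply: eq_bigr => p _; rewrite E. Qed.

Lemma ev_lin (k : fieldType) (U W : lmodType k) (phi : U -> W) X (f : B -> U) :
  lin phi -> ev X (fun h => phi (f h)) = phi (ev X f).
Proof.
move=> Hp; elim: X => [|[a h] X IH]; first by rewrite !ev_nil lin0.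
by rewrite !ev_cons IH Hp.
Qed.

Lemma ev_add (k : fieldType) (W : lmodType k) X (f g : B -> W) :
  ev X (fun h => f h + g h) = ev X f + ev X g.
Proof.
elim: X => [|[a h] X IH]; first by rewrite !ev_nil addr0.
rewrite !ev_cons IH scalerDr; rewrite -!addrA; congr (_ + _).
by rewrite addrC -!addrA; congr (_ + _); rewrite addrC.
Qed.

Lemma ev_scale (k : fieldType) (W : lmodType k) X b (f : B -> W) :
  ev X (fun h => b *: f h) = b *: ev X f.
Proof.
elim: X => [|[a h] X IH]; first by rewrite !ev_nil scaler0.
by rewrite !ev_cons IH scalerDr !scalerA mulrC.
Qed.

Lemma ev_opp (k : fieldType) (W : lmodType k) X (f : B -> W) :
  ev X (fun h => - f h) = - ev X f.
Proof.
have := ev_scale X (-1) f; rewrite scaleN1r => <-; apply: ev_ext => h; by rewrite scaleN1r.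
Qed.

Lemma ev_sub (k : fieldType) (W : lmodType k) X (f g : B -> W) :
  ev X (fun h => f h - g h) = ev X f - ev X g.
Proof. by rewrite ev_add ev_opp. Qed.

Lemma ev_zero (k : fieldType) (W : lmodType k) X :
  ev X (fun _ : B => (0 : W)) = 0.
Proof. by elim: X => [|[a h] X IH]; rewrite ?ev_nil // ev_cons IH scaler0 addr0. Qed.

Lemma kap_anti (k : fieldType) n m : kap k m n = - kap k n m.
Proof.
rewrite /kap; have -> : (n == - m) = (m == - n).
  by apply/eqP/eqP => E; rewrite E opprK.
case: (m =P - n) => [E|_]; last by rewrite oppr0.
by rewrite E sqrrN mulNr intrN mulNr.
Qed.

Lemma ev_br_anti (k : fieldType) (W : lmodType k) x y (f : B -> W) :
  ev (br k y x) f = - ev (br k x y) f.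
Proof.
case: x => [n|]; case: y => [m|] /=; rewrite ?ev_nil ?oppr0 //.
rewrite !ev_cons !ev_nil !addr0 kap_anti (addrC m n) opprD -!scaleNr.
by rewrite -intrN opprB.
Qed.


Lemma D_ext (k : fieldType) (W : lmodType k) (F G : seq B -> W) g w :
  (forall u, F u = G u) -> D F g w = D G g w.
Proof.
elim: w F G => [|h w IH] F G E //=.
by rewrite (ev_ext _ (fun h' => E (h' :: w))) (IH _ (fun u => G (h :: u))).
Qed.

Lemma D_ext_size (k : fieldType) (W : lmodType k) (F G : seq B -> W) g w :
  (forall u, size u = size w -> F u = G u) -> D F g w = D G g w.
Proof.
elim: w F G => [|h w IH] F G E //=.
rewrite (ev_ext _ (fun h' => E (h' :: w) erefl)).
by rewrite (IH _ (fun u => G (h :: u))) // => u Hu; apply: E => /=; rewrite Hu.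
Qed.

Lemma D_lin (k : fieldType) (U W : lmodType k) (phi : U -> W) (F : seq B -> U) g w :
  lin phi -> D (fun u => phi (F u)) g w = phi (D F g w).
Proof.
move=> Hp; elim: w F => [|h w IH] F /=; first by rewrite lin0.
by rewrite ev_lin // (IH (fun u => F (h :: u))) linD.
Qed.

Lemma D_add (k : fieldType) (W : lmodType k) (F G : seq B -> W) g w :
  D (fun u => F u + G u) g w = D F g w + D G g w.
Proof.
elim: w F G => [|h w IH] F G /=; first by rewrite addr0.
rewrite ev_add (IH (fun u => F (h :: u)) (fun u => G (h :: u))).
rewrite -!addrA; congr (_ + _); rewrite addrC -!addrA; congr (_ + _); by rewrite addrC.
Qed.

Lemma scale_lin (k : fieldType) (W : lmodType k) (a : k) : lin (fun x : W => a *: x).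
Proof. by move=> b x y; rewrite scalerDr !scalerA mulrC. Qed.

Lemma opp_lin (k : fieldType) (W : lmodType k) : lin (fun x : W => - x).
Proof. by move=> b x y; rewrite opprD scalerN. Qed.

Lemma D_scale (k : fieldType) (W : lmodType k) (F : seq B -> W) a g w :
  D (fun u => a *: F u) g w = a *: D F g w.
Proof. by have := D_lin F g w (@scale_lin _ W a). Qed.

Lemma D_opp (k : fieldType) (W : lmodType k) (F : seq B -> W) g w :
  D (fun u => - F u) g w = - D F g w.
Proof. by have := D_lin F g w (@opp_lin _ W). Qed.

Lemma D_sub (k : fieldType) (W : lmodType k) (F G : seq B -> W) g w :
  D (fun u => F u - G u) g w = D F g w - D G g w.
Proof. by rewrite D_add D_opp. Qed.

Lemma D_zero (k : fieldType) (W : lmodType k) g w :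
  D (fun _ => (0 : W)) g w = 0.
Proof.
elim: w => [|h w IH] //=; by rewrite ev_zero add0r IH.
Qed.

Lemma D_ev (k : fieldType) (W : lmodType k) X (F : B -> seq B -> W) g w :
  D (fun u => ev X (fun h => F h u)) g w = ev X (fun h => D (F h) g w).
Proof.
elim: X => [|[a h] X IH].
  by rewrite ev_nil (D_ext _ _ (G := fun _ => 0)) ?D_zero // => u; rewrite ev_nil.
rewrite ev_cons (D_ext _ _ (G := fun u => a *: F h u + ev X (fun h => F h u))).
  by rewrite D_add D_scale IH.
by move=> u; rewrite ev_cons.
Qed.

Lemma D_cat (k : fieldType) (W : lmodType k) (F : seq B -> W) g a w :
  D F g (a ++ w) = D (fun u => F (u ++ w)) g a + D (fun u => F (a ++ u)) g w.
Proof.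
elim: a F => [|h a IH] F /=; first by rewrite add0r.
by rewrite (IH (fun u => F (h :: u))) addrA.
Qed.


Lemma comb2 (k : fieldType) (W : lmodType k) (X Y : W) a1 b1 a2 b2 a3 b3 :
  a1 - a2 = a3 -> b1 - b2 = b3 ->
  a1 *: X + b1 *: Y - (a2 *: X + b2 *: Y) = a3 *: X + b3 *: Y.
Proof.
move=> <- <-; rewrite !scalerBl opprD !addrA; congr (_ + _); by rewrite addrAC.
Qed.

Lemma J2 (k : fieldType) (W : lmodType k) g x y (f : B -> W) :
  ev (br k g x) (fun h => ev (br k h y) f) - ev (br k g y) (fun h => ev (br k h x) f)
  = ev (br k x y) (fun h => ev (br k g h) f).
Proof.
case: g => [p|]; last first.
  rewrite /= !ev_nil subrr; transitivity (ev (br k x y) (fun _ => (0:W))); first by rewrite ev_zero.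
  by apply: ev_ext => h.
case: x => [q|]; case: y => [r|]; rewrite /= ?ev_nil ?ev_zero ?subr0 ?sub0r ?oppr0 //;
  rewrite !ev_cons !ev_nil /= ?ev_nil ?ev_zero.
- rewrite !scaler0 !addr0 !scalerDr !scalerA.
  rewrite [p + r + q]addrAC [p + (q + r)]addrA.
  apply: comb2.
    by rewrite -!intrM -intrB; congr (_%:~R); ring.
  rewrite /kap.
  have E1 : (r == - (p + q)) = (p + q + r == 0) by apply/eqP/eqP; lia.
  have E2 : (q == - (p + r)) = (p + q + r == 0) by apply/eqP/eqP; lia.
  have E3 : (q + r == - p) = (p + q + r == 0) by apply/eqP/eqP; lia.
  rewrite E1 E2 E3; case: eqP => [E|_]; last by rewrite !mulr0 subr0.
  have -> : r = - (p + q) by lia.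
  rewrite !mulrA -mulrBl; congr (_ / _).
  by rewrite -!intrM -intrB; congr (_%:~R); ring.
- by rewrite !scaler0 !addr0.
- by rewrite !scaler0 !addr0 oppr0.
Qed.

Lemma J1 (k : fieldType) (W : lmodType k) x y h (f : B -> W) :
  ev (br k x h) (fun h1 => ev (br k y h1) f) - ev (br k y h) (fun h1 => ev (br k x h1) f)
  = ev (br k y x) (fun h' => ev (br k h' h) f).
Proof.
have E (a b : B) : ev (br k a h) (fun h1 => ev (br k b h1) f)
                 = ev (br k h a) (fun h1 => ev (br k h1 b) f).
  rewrite (ev_br_anti h a) -ev_opp; apply: ev_ext => h1.
  by rewrite (ev_br_anti h1 b) opprK.
rewrite !E J2 (ev_br_anti x y) -ev_opp; apply: ev_ext => h'.
by rewrite (ev_br_anti h' h).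
Qed.

Lemma shuf (W : zmodType) (a b c d : W) : (a + b) - (c + d) = (a - c) + (b - d).
Proof. by rewrite opprD addrACA. Qed.

Lemma D_jacobi (k : fieldType) (W : lmodType k) (F : seq B -> W) x y w :
  D (fun u => D F y u) x w - D (fun u => D F x u) y w
  = ev (br k y x) (fun h => D F h w).
Proof.
elim: w F => [|h w IH] F.
  rewrite /= subrr; transitivity (ev (br k y x) (fun _ => (0:W))); first by rewrite ev_zero.
  by apply: ev_ext.
rewrite /=.
rewrite !D_add (D_ev (br k y h) (fun h2 u => F (h2 :: u)))
  (D_ev (br k x h) (fun h2 u => F (h2 :: u))) !ev_add.
rewrite -(J1 x y h (fun h2 => F (h2 :: w))) -(IH (fun u => F (h :: u))).
set A1 := ev (br k x h) _; set A2 := ev (br k y h) (fun h1 => ev (br k x h1) _).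
set B1 := ev (br k x h) (fun h1 => D _ y w); set C1 := ev (br k y h) (fun h2 => D _ x w).
set E1 := D _ x w; set E2 := D _ y w.
rewrite -[A1 + B1 + _]addrA -[A2 + C1 + _]addrA shuf; congr (_ + _).
rewrite [C1 + (B1 + E2)]addrA [C1 + B1]addrC -[B1 + C1 + E2]addrA shuf subrr add0r.
by rewrite shuf subrr add0r.
Qed.


Definition chi (k : fieldType) (h c : k) (x : B) : k :=
  match x with Some n => if n == 0 then h else 0 | None => c end.
Definition bl (x : B) : B := match x with Some n => Some `|n| | None => None end.
Definition isb (x : B) : bool := match x with Some n => 0 <= n | None => true end.
Definition om (k : fieldType) (M : lmodType k) (eM : int -> M -> M) (g : B) (x : M) : M :=
  match g with Some n => if n < 0 then eM n x else 0 | None => 0 end.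

Fixpoint psiF (k : fieldType) (M : lmodType k) (eM : int -> M -> M) (h c : k) (m : M)
  (n : nat) (w : seq B) : M :=
  match n, w with
  | n'.+1, g :: w' => chi h c (bl g) *: psiF eM h c m n' w'
                      + D (psiF eM h c m n') (bl g) w' + om eM g (psiF eM h c m n' w')
  | _, _ => m
  end.

Definition Psi (k : fieldType) (M : lmodType k) (eM : int -> M -> M) (h c : k) (m : M)
  (w : seq B) : M := psiF eM h c m (size w) w.

Lemma Psi_nil (k : fieldType) (M : lmodType k) (eM : int -> M -> M) (h c : k) (m : M) :
  Psi eM h c m [::] = m.
Proof. by []. Qed.

Lemma Psi_cons (k : fieldType) (M : lmodType k) (eM : int -> M -> M) (h c : k) (m : M) g w :
  Psi eM h c m (g :: w) = chi h c (bl g) *: Psi eM h c m w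
     + D (Psi eM h c m) (bl g) w + om eM g (Psi eM h c m w).
Proof.
rewrite /Psi /=; congr (_ + _ + _).
by apply: D_ext_size => u Hu; rewrite Hu.
Qed.

Lemma bl_isb x : isb x -> bl x = x.
Proof. by case: x => [n|] //= Hn; rewrite ger0_norm. Qed.

Lemma isb_bl x : isb (bl x).
Proof. by case: x => [n|] //=. Qed.

Lemma om_isb (k : fieldType) (M : lmodType k) (eM : int -> M -> M) x v :
  isb x -> om eM x v = 0.
Proof. by case: x => [n|] //= Hn; rewrite ltNge Hn. Qed.

Lemma om_lin (k : fieldType) (M : lmodType k) (eM : int -> M -> M) g :
  (forall n, lin (eM n)) -> lin (om eM g).
Proof.
move=> He a x y; case: g => [n|] /=; last by rewrite scaler0 addr0.
by case: ifP => _; rewrite ?He ?scaler0 ?addr0.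
Qed.

Lemma Psi_cons_b (k : fieldType) (M : lmodType k) (eM : int -> M -> M) (h c : k) (m : M) x w :
  isb x -> Psi eM h c m (x :: w) = chi h c x *: Psi eM h c m w + D (Psi eM h c m) x w.
Proof. by move=> Hx; rewrite Psi_cons bl_isb // om_isb // addr0. Qed.

Lemma Psi_R2 (k : fieldType) (M : lmodType k) (eM : int -> M -> M) (h c : k) (m : M) :
  (forall n x, eM (- n) x = - eM n x) -> (forall x, eM 0 x = 0) ->
  forall n w, Psi eM h c m (Some n :: w) - Psi eM h c m (Some (- n) :: w) = eM n (Psi eM h c m w).
Proof.
move=> eN e0 n w; rewrite !Psi_cons /= normrN.
rewrite opprD addrACA subrr add0r.
case: (ltrgtP n 0) => Hn.
- have -> : (- n < 0) = false by apply/negbTE; lia.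
  by rewrite subr0.
- have -> : (- n < 0) = true by lia.
  by rewrite eN sub0r opprK.
- by rewrite Hn oppr0 e0 addr0.
Qed.

Lemma chi_br (k : fieldType) (W : lmodType k) (h c : k) x y (G : B -> W) (v : W) :
  isb x -> isb y -> (forall z, isb z -> G z = chi h c z *: v) -> ev (br k x y) G = 0.
Proof.
case: x => [p|]; case: y => [q|] => Hp Hq HG; rewrite /= ?ev_nil //.
rewrite !ev_cons ev_nil addr0 !HG //=; last by rewrite addr_ge0.
rewrite /kap.
rewrite /= in Hp Hq.
case: (p + q =P 0) => E.
  have p0 : p = 0 by lia.
  have q0 : q = 0 by lia.
  rewrite p0 q0 subrr scale0r add0r eqxx /=.
  have -> : ((0:int) * (0 ^+ 2 - 1)) = 0 by rewrite mul0r.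
  by rewrite mul0r scale0r.
have -> : (q == - p) = false by apply/eqP; lia.
by rewrite !scale0r scaler0 addr0.
Qed.


Lemma Psi_hw (k : fieldType) (M : lmodType k) (eM : int -> M -> M) (h c : k) (m : M) :
  (forall n, lin (eM n)) ->
  forall n w, size w = n -> forall x, isb x ->
  Psi eM h c m (rcons w x) = chi h c x *: Psi eM h c m w.
Proof.
move=> He; set P := Psi eM h c m.
elim=> [|n IH] w Hs x Hx.
  by case: w Hs => // _; rewrite /P /= Psi_cons_b //= addr0.
case: w Hs => // g w [Hs] /=.
have IHw : P (rcons w x) = chi h c x *: P w by apply: IH.
rewrite /P !Psi_cons -/P IHw.
rewrite -cats1 D_cat.
rewrite (D_ext_size (G := fun u => chi h c x *: P u)); last first.
  by move=> u Hu; rewrite cats1; apply: IH => //; rewrite Hu.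
rewrite D_scale /= addr0.
rewrite (chi_br (h := h) (c := c) (v := P w)) ?isb_bl // ?addr0; last first.
  by move=> z Hz; rewrite cats1; apply: IH.
by rewrite (linZ _ _ (om_lin g He)) !scalerDr !scalerA mulrC.
Qed.

Lemma front_bb (k : fieldType) (M : lmodType k) (eM : int -> M -> M) (h c : k) (m : M) x y b :
  isb x -> isb y ->
  Psi eM h c m (x :: y :: b) - Psi eM h c m (y :: x :: b)
  = ev (br k x y) (fun z => Psi eM h c m (z :: b)).
Proof.
move=> Hx Hy; set P := Psi eM h c m.
have E (u v : B) : isb u -> isb v -> P (u :: v :: b) =
   (chi h c u *: (chi h c v *: P b + D P v b) + chi h c v *: D P u b)
   + (ev (br k u v) (fun z => P (z :: b)) + D (fun w => D P v w) u b).
  move=> Hu Hv; rewrite /P Psi_cons_b // -/P /=.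
  rewrite (D_ext (G := fun w => chi h c v *: P w + D P v w)); last first.
    by move=> w; rewrite /P Psi_cons_b.
  rewrite D_add D_scale {1}/P (Psi_cons_b _ _ _ _ _ Hv) -/P.
  by rewrite -[RHS]addrA; congr (_ + _); rewrite addrCA.
rewrite (E x y) // (E y x) //.
have -> : chi h c x *: (chi h c y *: P b + D P y b) + chi h c y *: D P x b
        = chi h c y *: (chi h c x *: P b + D P x b) + chi h c x *: D P y b.
  by rewrite !scalerDr !scalerA mulrC addrAC.
rewrite shuf subrr add0r shuf (D_jacobi P x y b).
have S : ev (br k x y) (fun z => P (z :: b)) = ev (br k x y) (fun z => D P z b).
  apply/eqP; rewrite -subr_eq0 -ev_sub; apply/eqP.
  apply: (chi_br (h := h) (c := c) (v := P b)) => // z Hz.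
  by rewrite /P Psi_cons_b // addrK.
by rewrite (ev_br_anti x y) (ev_br_anti x y) -S opprK addrK.
Qed.

Lemma D_cons (k : fieldType) (W : lmodType k) (F : seq B -> W) g h w :
  D F g (h :: w) = ev (br k g h) (fun h' => F (h' :: w)) + D (fun u => F (h :: u)) g w.
Proof. by []. Qed.

Lemma rearr3 (W : zmodType) (a1 b1 s1 a2 b2 s2 : W) :
  (a1 - b1 - s1) - (a2 - b2 - s2) = (a1 - a2) - (b1 - b2) - (s1 - s2).
Proof. by rewrite [LHS]shuf [X in X + _ = _]shuf -!opprD. Qed.

Lemma swap4 (W : zmodType) (x1 x2 x3 x4 : W) :
  (x1 - x2) - (x3 - x4) = (x1 - x3) - (x2 - x4).
Proof. by rewrite [LHS]shuf -opprD. Qed.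

Lemma swap4' (W : zmodType) (x1 x2 x3 x4 : W) :
  (x1 - x2) - (x3 - x4) = (x1 + x4) - (x2 + x3).
Proof. by rewrite [LHS]shuf opprK addrACA [RHS]shuf [- x3 + _]addrC. Qed.

Lemma pairc (k : fieldType) (W : lmodType k) (Y Y' Z : W) a kk :
  (a *: Y + (kk *: Z + 0)) + ((- a) *: Y' + ((- kk) *: Z + 0)) = a *: (Y - Y').
Proof. by rewrite !addr0 !scaleNr addrACA subrr addr0 scalerBr. Qed.

Definition Qf (k : fieldType) (M : lmodType k) (eM : int -> M -> M) (h c : k) (m : M)
  (b : seq B) (x y : B) : M :=
  Psi eM h c m (x :: y :: b) - Psi eM h c m (y :: x :: b)
  - ev (br k x y) (fun z => Psi eM h c m (z :: b)).

Lemma Qf_anti (k : fieldType) (M : lmodType k) (eM : int -> M -> M) (h c : k) (m : M) b x y :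
  Qf eM h c m b y x = - Qf eM h c m b x y.
Proof. by rewrite /Qf (ev_br_anti x y) !opprB opprK addrC. Qed.

Lemma front_c (k : fieldType) (M : lmodType k) (eM : int -> M -> M) (h c : k) (m : M) b n y :
  (forall n, lin (eM n)) ->
  (forall n x, eM (- n) x = - eM n x) -> (forall x, eM 0 x = 0) ->
  isb y -> Qf eM h c m b (Some n) y - Qf eM h c m b (Some (- n)) y = 0.
Proof.
move=> He eN e0 Hy; set P := Psi eM h c m.
rewrite /Qf -/P rearr3.
rewrite (Psi_R2 h c m eN e0) -/P.
rewrite /P !(Psi_cons_b _ _ _ _ _ Hy) -/P !D_cons.
rewrite [X in _ - X - _]shuf -scalerBr /P (Psi_R2 h c m eN e0 n b) -/P.
rewrite [X in _ - (_ + X) - _]shuf -D_sub.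
rewrite (D_ext (F := fun u => P (Some n :: u) - P (Some (- n) :: u)) (G := fun u => eM n (P u))); last first.
  by move=> u /=; rewrite /P (Psi_R2 h c m eN e0 n u).
rewrite (D_lin _ _ _ (He n)) (ev_br_anti y (Some n)) (ev_br_anti y (Some (- n))).
rewrite (linD _ _ (He n)) (linZ _ _ (He n)).
set X := chi h c y *: _; set Y := eM n (D P y b).
set T1 := ev (br k y (Some n)) _; set T2 := ev (br k y (Some (- n))) _.
rewrite -[- T1 - - T2]opprD [T1 - T2 + Y]addrC [Z in Z - _ = 0]shuf subrr add0r.
by rewrite [- (Y + _)]opprD [Y + (- Y + _)]addrA subrr add0r subrr.
Qed.

Lemma kap_NN (k : fieldType) n m : kap k (- n) (- m) = - kap k n m.
Proof.
rewrite /kap opprK; have -> : (- m == n) = (m == - n).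
  by apply/eqP/eqP => E; [rewrite -E opprK | rewrite E opprK].
by case: ifP => _; rewrite ?oppr0 // sqrrN mulNr intrN mulNr.
Qed.

Lemma kap_N1 (k : fieldType) n m : kap k (- n) m = - kap k n (- m).
Proof.
rewrite /kap opprK; have -> : (- m == - n) = (m == n).
  by apply/eqP/eqP => E; [rewrite -(opprK m) E opprK | rewrite E].
by case: ifP => _; rewrite ?oppr0 // sqrrN mulNr intrN mulNr.
Qed.

Lemma br_SS (k : fieldType) n m :
  br k (Some n) (Some m) = [:: ((n - m)%:~R, Some (n + m)); (kap k n m, None)].
Proof. by []. Qed.

Lemma front_d (k : fieldType) (M : lmodType k) (eM : int -> M -> M) (h c : k) (m : M) b n q :
  is_O_action eM ->
  (Qf eM h c m b (Some n) (Some q) - Qf eM h c m b (Some (- n)) (Some q))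
  - (Qf eM h c m b (Some n) (Some (- q)) - Qf eM h c m b (Some (- n)) (Some (- q))) = 0.
Proof.
case=> He e0 eN ecomm; set P := Psi eM h c m.
rewrite /Qf -/P [X in X - _ = 0]rearr3 [X in _ - X = 0]rearr3 [LHS]rearr3.
rewrite /P (Psi_R2 h c m eN e0 n (Some q :: b)) (Psi_R2 h c m eN e0 n (Some (- q) :: b)).
rewrite -(linB _ _ (He n)) (Psi_R2 h c m eN e0 q b).
rewrite [X in _ - X - _ = 0]swap4 (Psi_R2 h c m eN e0 q (Some n :: b)) (Psi_R2 h c m eN e0 q (Some (- n) :: b)).
rewrite -(linB _ _ (He q)) (Psi_R2 h c m eN e0 n b) -/P.
rewrite [X in _ - X = 0]swap4' !br_SS !ev_cons !ev_nil kap_NN kap_N1 !opprK.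
have i1 : - n + q = - (n - q) by rewrite opprB addrC.
have i2 : - n - q = - (n + q) by rewrite opprD.
rewrite i1 i2 !intrN (pairc (P (Some (n + q) :: b)) (P (Some (- (n + q)) :: b)) (P (None :: b))).
rewrite [X in _ - (_ - X) = 0]addrC.
rewrite (pairc (P (Some (n - q) :: b)) (P (Some (- (n - q)) :: b)) (P (None :: b))).
rewrite /P (Psi_R2 h c m eN e0 (n + q) b) (Psi_R2 h c m eN e0 (n - q) b).
by rewrite ecomm subrr.
Qed.


Lemma front_all (k : fieldType) (M : lmodType k) (eM : int -> M -> M) (h c : k) (m : M) b x y :
  is_O_action eM -> Qf eM h c m b x y = 0.
Proof.
move=> HO; have [He e0 eN ecomm] := HO.
have bb (u v : B) : isb u -> isb v -> Qf eM h c m b u v = 0.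
  by move=> Hu Hv; rewrite /Qf front_bb // subrr.
have nb (u v : B) : isb v -> Qf eM h c m b u v = 0.
  move=> Hv; case: u => [p|]; last exact: bb.
  case: (leP 0 p) => Hp; first exact: bb.
  have Hb : isb (Some (- p)) by rewrite /=; lia.
  have := front_c h c m b (- p) He eN e0 Hv; rewrite opprK (bb _ _ Hb Hv) sub0r.
  by move/eqP; rewrite oppr_eq0 => /eqP.
have bn (s t : B) : isb s -> Qf eM h c m b s t = 0.
  by move=> Hu; rewrite Qf_anti nb // oppr0.
case Hy: (isb y); first exact: nb.
case Hx: (isb x); first exact: bn.
case: x Hx => [p|] //= Hp; case: y Hy => [q|] //= Hq.
have Hp' : isb (Some (- p)) by rewrite /=; lia.
have Hq' : isb (Some (- q)) by rewrite /=; lia.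
have := front_d h c m b (- p) (- q) HO; rewrite !opprK.
rewrite (bb _ _ Hp' Hq') (nb _ _ Hq') (bn _ _ Hp') subrr !sub0r opprK.
by [].
Qed.

Lemma acsw (W : zmodType) (a b c d : W) : (a - b) + (c - d) = (a - d) + (c - b).
Proof. by rewrite addrACA [RHS]addrACA [- d + _]addrC. Qed.

Lemma D_part (k : fieldType) (W : lmodType k) (P : seq B -> W) g x y a b :
  (forall u b' x' y', size u = size a ->
     P (u ++ x' :: y' :: b') - P (u ++ y' :: x' :: b') = ev (br k x' y') (fun z => P (u ++ z :: b'))) ->
  D P g (a ++ x :: y :: b) - D P g (a ++ y :: x :: b)
  = ev (br k x y) (fun z => D P g (a ++ z :: b)).
Proof.
move=> IH; rewrite !D_cat.
rewrite (ev_ext _ (g := fun z => D (fun u => P (u ++ z :: b)) g a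
     + (ev (br k g z) (fun z' => P (a ++ z' :: b)) + D (fun u => P (a ++ z :: u)) g b))); last first.
  by move=> z; rewrite D_cat D_cons.
rewrite ev_add ev_add shuf; congr (_ + _).
  rewrite -D_sub (D_ext_size (G := fun u => ev (br k x y) (fun z => P (u ++ z :: b)))); last first.
    by move=> u Hu; apply: IH.
  by rewrite (D_ev (br k x y) (fun z u => P (u ++ z :: b))).
rewrite !D_cons [LHS]shuf [X in _ + X = _]shuf addrA acsw; congr (_ + _); last first.
  rewrite -D_sub (D_ext (G := fun u => ev (br k x y) (fun z => P (a ++ z :: u)))); last first.
    by move=> u /=; rewrite IH.
  by rewrite (D_ev (br k x y) (fun z u => P (a ++ z :: u))).
rewrite -!ev_sub.
rewrite (ev_ext _ (g := fun z => ev (br k z y) (fun z' => P (a ++ z' :: b)))); last first.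
  by move=> z; rewrite IH.
rewrite (ev_ext (br k g y) (g := fun z => - ev (br k z x) (fun z' => P (a ++ z' :: b)))); last first.
  by move=> z /=; rewrite IH // (ev_br_anti z x).
by rewrite ev_opp J2.
Qed.


Lemma Psi_R1 (k : fieldType) (M : lmodType k) (eM : int -> M -> M) (h c : k) (m : M) :
  is_O_action eM -> forall n a, size a = n -> forall b x y,
  Psi eM h c m (a ++ x :: y :: b) - Psi eM h c m (a ++ y :: x :: b)
  = ev (br k x y) (fun z => Psi eM h c m (a ++ z :: b)).
Proof.
move=> HO; have [He e0 eN ecomm] := HO; set P := Psi eM h c m.
elim=> [|n IH] a Ha b x y.
  case: a Ha => // _ /=.
  by have := front_all h c m b x y HO; rewrite /Qf -/P => /eqP; rewrite subr_eq0 => /eqP.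
case: a Ha => // g a [Ha] /=.
rewrite /P !Psi_cons -/P.
rewrite (ev_ext _ (g := fun z => chi h c (bl g) *: P (a ++ z :: b)
   + D P (bl g) (a ++ z :: b) + om eM g (P (a ++ z :: b)))); last first.
  by move=> z; rewrite /P Psi_cons.
rewrite !ev_add ev_scale (ev_lin _ _ (om_lin g He)).
rewrite [LHS]shuf [X in X + _ = _]shuf -scalerBr -(linB _ _ (om_lin g He)) IH //.
rewrite D_part // => u b' x' y' Hu; apply: IH; by rewrite Hu.
Qed.


Definition R1f (k : fieldType) (M : lmodType k) (F : seq B -> M) : Prop :=
  forall a b x y, F (a ++ x :: y :: b) - F (a ++ y :: x :: b) = ev (br k x y) (fun z => F (a ++ z :: b)).
Definition R2f (k : fieldType) (M : lmodType k) (eM : int -> M -> M) (F : seq B -> M) : Prop :=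
  forall n w, F (Some n :: w) - F (Some (- n) :: w) = eM n (F w).
Definition HWf (k : fieldType) (M : lmodType k) (h c : k) (F : seq B -> M) : Prop :=
  forall w x, isb x -> F (rcons w x) = chi h c x *: F w.

Lemma move_right (k : fieldType) (M : lmodType k) (w : seq B) :
  forall (F : seq B -> M), R1f F -> forall x, F (x :: w) = F (rcons w x) + D F x w.
Proof.
elim: w => [|g w IH] F HF x; first by rewrite /= addr0.
have E := HF [::] w x g; move/eqP: E; rewrite subr_eq => /eqP /= ->.
have HG : R1f (fun u => F (g :: u)) by move=> a b x' y'; exact: (HF (g :: a)).
rewrite (IH _ HG).
by rewrite addrCA.
Qed.

Lemma good_eq (k : fieldType) (M : lmodType k) (eM : int -> M -> M) (h c : k) (F : seq B -> M) :
  (forall n x, eM (- n) x = - eM n x) ->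
  R1f F -> R2f eM F -> HWf h c F -> forall g w,
  F (g :: w) = chi h c (bl g) *: F w + D F (bl g) w + om eM g (F w).
Proof.
move=> eN H1 H2 H3 g w.
have -> : F (g :: w) = F (bl g :: w) + om eM g (F w).
  case: g => [n|] /=; last by rewrite addr0.
  case: (ltrP n 0) => Hn.
    rewrite ltr0_norm //.
    have := H2 (- n) w; rewrite opprK eN => /eqP; rewrite subr_eq => /eqP ->.
    by rewrite addrC addrA subrr add0r.
  by rewrite ger0_norm // addr0.
by rewrite move_right // H3 // isb_bl.
Qed.

Lemma good_uniq (k : fieldType) (M : lmodType k) (eM : int -> M -> M) (h c : k) (F G : seq B -> M) :
  (forall n x, eM (- n) x = - eM n x) ->
  R1f F -> R2f eM F -> HWf h c F -> R1f G -> R2f eM G -> HWf h c G ->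
  F [::] = G [::] -> forall w, F w = G w.
Proof.
move=> eN F1 F2 F3 G1 G2 G3 E0.
suff : forall n w, size w = n -> F w = G w by move=> H w; exact: (H _ w erefl).
elim=> [|n IH] [|g w] //= [Hs].
rewrite (good_eq eN F1 F2 F3) (good_eq eN G1 G2 G3) IH //.
by rewrite (D_ext_size (G := G)) // => u Hu; apply: IH; rewrite Hu.
Qed.


Definition goodN (k : fieldType) (M : lmodType k) (eM : int -> M -> M) (F : seq B -> M) : Prop :=
  R1f F /\ ((forall n, lin (eM n)) -> R2f eM F).

Record Nt (k : fieldType) (M : lmodType k) (eM : int -> M -> M) := MkN {
  nf : seq B -> M; nP : goodN eM nf }.

HB.instance Definition _ (k : fieldType) (M : lmodType k) (eM : int -> M -> M) :=
  boolp.gen_eqMixin (@Nt k M eM).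
HB.instance Definition _ (k : fieldType) (M : lmodType k) (eM : int -> M -> M) :=
  boolp.gen_choiceMixin (@Nt k M eM).

Lemma N_ext (k : fieldType) (M : lmodType k) (eM : int -> M -> M) (x y : @Nt k M eM) :
  (forall u, nf x u = nf y u) -> x = y.
Proof.
case: x => f Pf; case: y => g Pg /= E.
have efg : f = g by apply: boolp.funext.
subst g; congr MkN; exact: boolp.Prop_irrelevance.
Qed.

Lemma good0 (k : fieldType) (M : lmodType k) (eM : int -> M -> M) : goodN eM (fun _ => 0).
Proof.
split; first by move=> a b x y; rewrite subrr ev_zero.
by move=> He n w; rewrite subrr lin0.
Qed.

Lemma goodlin (k : fieldType) (M : lmodType k) (eM : int -> M -> M) (F G : seq B -> M) a :
  goodN eM F -> goodN eM G -> goodN eM (fun u => a *: F u + G u).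
Proof.
move=> [F1 F2] [G1 G2]; split.
  move=> p q x y; rewrite shuf -scalerBr F1 G1.
  by rewrite ev_add ev_scale.
move=> He n w; rewrite shuf -scalerBr F2 // G2 //.
by rewrite He.
Qed.

Definition Nzero (k : fieldType) (M : lmodType k) (eM : int -> M -> M) : Nt eM :=
  MkN (good0 eM).
Definition Nlin (k : fieldType) (M : lmodType k) (eM : int -> M -> M) (a : k) (x y : Nt eM) : Nt eM :=
  MkN (goodlin a (nP x) (nP y)).
Definition Nadd (k : fieldType) (M : lmodType k) (eM : int -> M -> M) (x y : Nt eM) : Nt eM :=
  Nlin 1 x y.
Definition Nscale (k : fieldType) (M : lmodType k) (eM : int -> M -> M) (a : k) (x : Nt eM) : Nt eM :=
  Nlin a x (Nzero eM).
Definition Nopp (k : fieldType) (M : lmodType k) (eM : int -> M -> M) (x : Nt eM) : Nt eM :=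
  Nlin (-1) x (Nzero eM).

Lemma NaddA (k : fieldType) (M : lmodType k) (eM : int -> M -> M) : associative (@Nadd k M eM).
Proof. by move=> x y z; apply: N_ext => u /=; rewrite !scale1r addrA. Qed.
Lemma NaddC (k : fieldType) (M : lmodType k) (eM : int -> M -> M) : commutative (@Nadd k M eM).
Proof. by move=> x y; apply: N_ext => u /=; rewrite !scale1r addrC. Qed.
Lemma Nadd0 (k : fieldType) (M : lmodType k) (eM : int -> M -> M) : left_id (Nzero eM) (@Nadd k M eM).
Proof. by move=> x; apply: N_ext => u /=; rewrite scaler0 add0r. Qed.
Lemma NaddN (k : fieldType) (M : lmodType k) (eM : int -> M -> M) : left_inverse (Nzero eM) (@Nopp k M eM) (@Nadd k M eM).
Proof. by move=> x; apply: N_ext => u /=; rewrite scale1r addr0 scaleN1r addNr. Qed.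

HB.instance Definition _ (k : fieldType) (M : lmodType k) (eM : int -> M -> M) :=
  GRing.isZmodule.Build (@Nt k M eM) (@NaddA k M eM) (@NaddC k M eM) (@Nadd0 k M eM) (@NaddN k M eM).

Lemma NscaleA (k : fieldType) (M : lmodType k) (eM : int -> M -> M) a b (v : Nt eM) :
  Nscale a (Nscale b v) = Nscale (a * b) v.
Proof. by apply: N_ext => u /=; rewrite !addr0 scalerA. Qed.
Lemma Nscale1 (k : fieldType) (M : lmodType k) (eM : int -> M -> M) : left_id 1 (@Nscale k M eM).
Proof. by move=> x; apply: N_ext => u /=; rewrite scale1r addr0. Qed.
Lemma NscaleDr (k : fieldType) (M : lmodType k) (eM : int -> M -> M) :
  right_distributive (@Nscale k M eM) (@Nadd k M eM).
Proof. by move=> a x y; apply: N_ext => u /=; rewrite !scale1r !addr0 scalerDr. Qed.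
Lemma NscaleDl (k : fieldType) (M : lmodType k) (eM : int -> M -> M) (v : Nt eM) :
  {morph (fun a => @Nscale k M eM a v) : a b / a + b >-> Nadd a b}.
Proof. by move=> a b; apply: N_ext => u /=; rewrite !scale1r !addr0 scalerDl. Qed.

HB.instance Definition _ (k : fieldType) (M : lmodType k) (eM : int -> M -> M) :=
  GRing.Zmodule_isLmodule.Build k (@Nt k M eM) (@NscaleA k M eM) (@Nscale1 k M eM)
    (@NscaleDr k M eM) (@NscaleDl k M eM).

Lemma nfD (k : fieldType) (M : lmodType k) (eM : int -> M -> M) (x y : Nt eM) u :
  nf (x + y) u = nf x u + nf y u.
Proof. by rewrite /= scale1r. Qed.
Lemma nfZ (k : fieldType) (M : lmodType k) (eM : int -> M -> M) a (x : Nt eM) u :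
  nf (a *: x) u = a *: nf x u.
Proof. by rewrite /= addr0. Qed.
Lemma nf0 (k : fieldType) (M : lmodType k) (eM : int -> M -> M) u :
  nf (0 : Nt eM) u = 0.
Proof. by []. Qed.
Lemma nfN (k : fieldType) (M : lmodType k) (eM : int -> M -> M) (x : Nt eM) u :
  nf (- x) u = - nf x u.
Proof. by rewrite /= addr0 scaleN1r. Qed.


Lemma shift_good (k : fieldType) (M : lmodType k) (eM : int -> M -> M) (F : seq B -> M) g :
  goodN eM F -> goodN eM (fun u => F (rcons u g)).
Proof.
move=> [F1 F2]; split.
  move=> a b x y; rewrite !rcons_cat /= F1.
  by apply: ev_ext => z; rewrite rcons_cat.
by move=> He n w /=; rewrite F2.
Qed.

Definition LN (k : fieldType) (M : lmodType k) (eM : int -> M -> M) (n : int) (x : Nt eM) : Nt eM :=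
  MkN (shift_good (Some n) (nP x)).
Definition CN (k : fieldType) (M : lmodType k) (eM : int -> M -> M) (x : Nt eM) : Nt eM :=
  MkN (shift_good None (nP x)).

Lemma rcons2 (T : Type) (u : seq T) a b : rcons (rcons u a) b = u ++ [:: a, b & [::]].
Proof. by rewrite -!cats1 -catA. Qed.

Lemma N_vir (k : fieldType) (M : lmodType k) (eM : int -> M -> M) :
  is_vir_action (@LN k M eM) (@CN k M eM).
Proof.
split.
- by move=> n a x y; apply: N_ext => u /=; rewrite ?scale1r ?addr0.
- by move=> a x y; apply: N_ext => u /=; rewrite ?scale1r ?addr0.
- move=> n m x; apply: N_ext => u.
  rewrite /= !scale1r !addr0 scaleN1r !rcons2 (proj1 (nP x)) br_SS !ev_cons ev_nil addr0 !cats1.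
  by rewrite /kap.
- move=> n x; apply: N_ext => u /=.
  apply/eqP; rewrite -subr_eq0; apply/eqP.
  by rewrite !rcons2 (proj1 (nP x)) ev_nil.
Qed.

Definition letter (k : fieldType) (V : lmodType k) (L : int -> V -> V) (C : V -> V) (g : B) : V -> V :=
  match g with Some n => L n | None => C end.

Fixpoint act (k : fieldType) (V : lmodType k) (L : int -> V -> V) (C : V -> V) (u : seq B) (x : V) : V :=
  match u with [::] => x | g :: u' => letter L C g (act L C u' x) end.

Lemma act_cat (k : fieldType) (V : lmodType k) (L : int -> V -> V) (C : V -> V) a w x :
  act L C (a ++ w) x = act L C a (act L C w x).
Proof. by elim: a => //= g a ->. Qed.

Lemma act_rcons (k : fieldType) (V : lmodType k) (L : int -> V -> V) (C : V -> V) u g x :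
  act L C (rcons u g) x = act L C u (letter L C g x).
Proof. by rewrite -cats1 act_cat. Qed.

Lemma act_lin (k : fieldType) (V : lmodType k) (L : int -> V -> V) (C : V -> V) u :
  is_vir_action L C -> lin (act L C u).
Proof.
case=> HL HC _ _; elim: u => [|g u IH] a x y //=.
by rewrite IH; case: g => [n|] /=; [rewrite HL | rewrite HC].
Qed.

Lemma comp_lin (k : fieldType) (U V W : lmodType k) (f : V -> W) (g : U -> V) :
  lin f -> lin g -> lin (fun x => f (g x)).
Proof. by move=> Hf Hg a x y; rewrite Hg Hf. Qed.

Lemma letter_comm (k : fieldType) (V : lmodType k) (L : int -> V -> V) (C : V -> V) p q y :
  is_vir_action L C ->
  letter L C p (letter L C q y) - letter L C q (letter L C p y) = ev (br k p q) (fun z => letter L C z y).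
Proof.
case=> _ _ Hc HCL; case: p => [n|]; case: q => [m|] /=; rewrite ?ev_nil.
- by rewrite Hc !ev_cons ev_nil addr0 /kap.
- by rewrite HCL subrr.
- by rewrite HCL subrr.
- by rewrite subrr.
Qed.


Lemma letter_hw (k : fieldType) (V : lmodType k) (L : int -> V -> V) (C : V -> V) (h c : k) v x :
  is_hw_vector L C h c v -> isb x -> letter L C x v = chi h c x *: v.
Proof.
case=> H0 HC Hp; case: x => [n|] //= Hn.
case: (n =P 0) => [->|Hn0]; first by [].
by rewrite Hp ?scale0r // lt_neqAle Hn andbT eq_sym; apply/eqP.
Qed.

Theorem proposition3p3 (k : fieldType) (chark : [pchar k] =i pred0) (h c : k)
    (V : lmodType k) (L : int -> V -> V) (C : V -> V) (v : V) :
  is_verma h c L C v -> free_rank1_O (restrict_O L).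
Proof.
case=> Hvir Hhwv Huniv.
exists v => M eM m HO.
have [He e0 eN ecomm] := HO.
have He' : forall n, lin (eM n) by exact: He.
pose P := Psi eM h c m.
have Pgood : goodN eM P.
  split; first by move=> a b x y; exact: (Psi_R1 h c m HO (erefl (size a))).
  by move=> _ n w; exact: (Psi_R2 h c m eN e0).
pose w := @MkN k M eM P Pgood.
have Phw : HWf h c P by move=> u x Hx; exact: (Psi_hw h c m He' (erefl (size u)) Hx).
have whw : is_hw_vector (@LN k M eM) (@CN k M eM) h c w.
  split.
  - by apply: N_ext => u /=; rewrite Phw // addr0.
  - by apply: N_ext => u /=; rewrite Phw // addr0.
  - move=> n Hn; apply: N_ext => u /=; rewrite Phw /=; last exact: ltW.
    by rewrite gt_eqF // scale0r.
have [F [[FL Fv FLn FC] Funiq]] := Huniv (Nt eM) (@LN k M eM) (@CN k M eM) w (N_vir eM) whw.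
exists (fun x => nf (F x) [::]); split.
  split.
  - by move=> a x y /=; rewrite FL /= scale1r addr0.
  - by rewrite Fv.
  - move=> n x /=; rewrite /restrict_O (linB _ _ FL) !FLn /= scale1r addr0 scaleN1r.
    exact: ((nP (F x)).2 He' n [::]).
move=> f' [f'L f'v f'O].
have Hg : forall x, goodN eM (fun u => f' (act L C u x)).
  move=> x; split.
  - move=> a b p q; rewrite !act_cat /=.
    rewrite -(linB _ _ (comp_lin f'L (act_lin a Hvir))) letter_comm //.
    rewrite -(ev_lin _ _ (comp_lin f'L (act_lin a Hvir))).
    by apply: ev_ext => z; rewrite act_cat.
  - move=> _ n u /=; rewrite -(linB _ _ f'L); exact: f'O.
pose Phi x := @MkN k M eM _ (Hg x).
have PhiP : [/\ is_klinear Phi, Phi v = w, forall n x, Phi (L n x) = LN n (Phi x)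
             & forall x, Phi (C x) = CN (Phi x)].
  split.
  - move=> a x y; apply: N_ext => u /=.
    by rewrite (act_lin u Hvir) f'L scale1r addr0.
  - apply: N_ext => u /=.
    apply: (good_uniq eN (Hg v).1 ((Hg v).2 He') _ Pgood.1 (Pgood.2 He') Phw) => //.
    move=> u' x Hx /=; rewrite act_rcons (letter_hw Hhwv Hx).
    by rewrite (linZ _ _ (act_lin u' Hvir)) (linZ _ _ f'L).
  - by move=> n x; apply: N_ext => u /=; rewrite act_rcons.
  - by move=> x; apply: N_ext => u /=; rewrite act_rcons.
have EF := Funiq Phi PhiP.
by apply: boolp.funext => x /=; rewrite EF.
Qed.
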